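(* Let $\mathbf{A},\mathbf{B}\in\mathbb{R}^{d\times d}$ be symmetric positive definite matrices with $\|\mathbf{A}-\mathbf{B}\|_2\le\varepsilon_1\|\mathbf{A}\|_2$, and let $\mathbf{r}_1,\mathbf{r}_2\in\mathbb{R}^d$ be unit vectors with $\|\mathbf{r}_1-\mathbf{r}_2\|_2\le\varepsilon_2$. If $\frac{\lambda_{\max}(\mathbf{A})}{\lambda_{\min}(\mathbf{A})}(\varepsilon_2+\varepsilon_1)\le\frac12$, then $$\Big\|\frac{\mathbf{A}\mathbf{r}_1}{\|\mathbf{A}\mathbf{r}_1\|_2}-\frac{\mathbf{B}\mathbf{r}_2}{\|\mathbf{B}\mathbf{r}_2\|_2}\Big\|_2\le4\frac{\lambda_{\max}(\mathbf{A})}{\lambda_{\min}(\mathbf{A})}(\varepsilon_2+\varepsilon_1).$$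
   Context: $\|\cdot\|_2$ on matrices is the operator norm; $\lambda_{\max}(\mathbf{A}),\lambda_{\min}(\mathbf{A})$ are the largest and smallest eigenvalues of $\mathbf{A}$. *)

(* Defs.v *)
From HB Require Import structures.
From mathcomp Require Import all_boot all_order all_algebra.
From mathcomp Require Import classical_sets reals.
Set Implicit Arguments. Unset Strict Implicit. Unset Printing Implicit Defensive.
Import Order.TTheory GRing.Theory Num.Theory.
Local Open Scope ring_scope.
Local Open Scope classical_set_scope.

Definition vnorm (R : realType) (d : nat) (v : 'cV[R]_d) : R :=
  Num.sqrt (\sum_(i < d) v i 0 ^+ 2).

Definition opnorm (R : realType) (d : nat) (A : 'M[R]_d) : R :=
  sup [set vnorm (A *m x) | x in [set x : 'cV[R]_d | vnorm x = 1]].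

Definition eigenvalues (R : realType) (d : nat) (A : 'M[R]_d) : set R :=
  [set a | eigenvalue A a].

Definition lambda_max (R : realType) (d : nat) (A : 'M[R]_d) : R :=
  sup (eigenvalues A).

Definition lambda_min (R : realType) (d : nat) (A : 'M[R]_d) : R :=
  inf (eigenvalues A).

Definition spd (R : realType) (d : nat) (A : 'M[R]_d) : Prop :=
  A^T = A /\ forall x : 'cV[R]_d, x != 0 -> 0 < (x^T *m A *m x) 0 0.

(* Main.v *)
Require Import Defs.
From HB Require Import structures.
From mathcomp Require Import all_boot all_order all_algebra.
From mathcomp Require Import classical_sets reals.
From mathcomp Require Import complex spectral sesquilinear.
From mathcomp Require Import ring lra.
Import Order.TTheory GRing.Theory Num.Theory.
Set Implicit Arguments. Unset Strict Implicit. Unset Printing Implicit Defensive.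
Local Open Scope ring_scope.
Section S.
Variable R : realType.
Local Notation C := (R[i]).
Local Notation f := (real_complex R).
Lemma realC (x : R) : (f x : C) \is Num.real.
Proof. rewrite realE ler0c -(rmorph0 f) lecR. exact: le_total. Qed.
Lemma conjRC (x : R) : ((f x : C)^* = f x)%R.
Proof. exact/CrealP/realC. Qed.
Lemma real_ReE (z : C) : z \is Num.real -> z = f (complex.Re z).
Proof.
rewrite realE !lecE; case: z => a b /=.
case/orP=> /andP[/eqP H _]; [by rewrite H | by rewrite -H]. Qed.
Lemma ge0_Re (z : C) : 0 <= z -> 0 <= complex.Re z.
Proof. by rewrite lecE => /andP[_]. Qed.
Definition sq d (v : 'cV[R]_d) := \sum_i v i 0 ^+ 2.

Local Notation tc M := (map_mx Num.conj_op (M^T)).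

Lemma sq_map d (x : 'cV[R]_d) : f (sq x) = ((tc (map_mx f x)) *m map_mx f x) 0 0.
Proof.
rewrite /sq rmorph_sum mxE; apply: eq_bigr => i _.
by rewrite !mxE conjRC rmorphXn expr2.
Qed.

Lemma tcM m n p (A : 'M[R[i]]_(m, n)) (B : 'M[R[i]]_(n, p)) :
  tc (A *m B) = tc B *m tc A.
Proof. by rewrite trmx_mul map_mxM. Qed.

Lemma spec_sym d (M : 'M[R]_d) : M^T = M ->
  exists r : 'I_d -> R, (forall i, eigenvalue M (r i)) /\
   forall x : 'cV[R]_d, exists w : 'I_d -> R, (forall i, 0 <= w i) /\
     sq x = \sum_i w i /\ sq (M *m x) = \sum_i r i ^+ 2 * w i.
Proof.
move=> hM.
set Mc := map_mx f M.
have hMc : (tc Mc) = Mc.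
  apply/matrixP=> i j; rewrite !mxE conjRC; congr f.
  by have := congr1 (fun N : 'M[R]_d => N i j) hM; rewrite mxE.
have normal : Mc \is normalmx by apply/normalmxP; rewrite hMc.
have herm : Mc \is hermsymmx by rewrite is_hermitianmxE expr0 scale1r hMc.
set P := spectralmx Mc; set D := spectral_diag Mc.
have /orthomx_spectralP eqM := normal.
rewrite -/P -/D in eqM.
have Pu : P \is unitarymx := spectral_unitarymx Mc.
have Punit : P \in unitmx := spectral_unit Mc.
have invP : invmx P = (tc P) := invmx_unitary Pu.
have DR : D \is a realmx := hermitian_spectral_diag_real herm.
have Dreal i : D 0 i \is Num.real by move/mxOverP: DR; apply.
have PtP : (tc P) *m P = 1%:M by rewrite -invP mulVmx.
have PPt : P *m (tc P) = 1%:M by apply/unitarymxP.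
exists (fun i => complex.Re (D 0 i)); split.
  move=> i; rewrite eigenvalue_root_char -(fmorph_root f) map_char_poly -/Mc.
  rewrite /= -(real_ReE (Dreal i)).
  rewrite -eigenvalue_root_char; apply/eigenvalueP; exists (row i P).
    rewrite -row_mul eqM !mulmxA mulmxV // mul1mx mul_diag_mx.
    by apply/rowP => j; rewrite !mxE.
  apply/eqP => h0; move/matrixP/(_ i i): PPt; rewrite !mxE big1 ?eqxx /=.
    by move/eqP; rewrite eq_sym oner_eq0.
  move=> j _; have := congr1 (fun N : 'rV[R[i]]_d => N 0 j) h0; rewrite !mxE => ->.
  by rewrite mul0r.
move=> x; set xc := map_mx f x; set y := P *m xc.
exists (fun i => complex.Re ((y i 0)^* * y i 0)); split.
  by move=> i; apply: ge0_Re; rewrite mulrC mul_conjC_ge0.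
have wE i : f (complex.Re ((y i 0)^* * y i 0)) = (y i 0)^* * y i 0.
  by rewrite -real_ReE // ger0_real // mulrC mul_conjC_ge0.
split.
  apply: complexI; rewrite sq_map rmorph_sum -/xc.
  have -> : (tc xc) *m xc = (tc y) *m y.
    by rewrite /y trmx_mul map_mxM mulmxA -(mulmxA _ _ P) PtP mulmx1.
  by rewrite mxE; apply: eq_bigr => i _; rewrite /= wE !mxE.
apply: complexI; rewrite sq_map rmorph_sum map_mxM -/Mc -/xc.
have -> : Mc *m xc = (tc P) *m diag_mx D *m y by rewrite eqM invP -!mulmxA.
have -> : (tc ((tc P) *m diag_mx D *m y)) = (tc y) *m diag_mx D *m P.
  rewrite !tcM trmxCK.
  have -> : tc (diag_mx D) = diag_mx D by rewrite tr_diag_mx map_diag_mx realmxC.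
  by rewrite mulmxA.
clearbody y.
have -> : tc y *m diag_mx D *m P *m (tc P *m diag_mx D *m y) =
    tc y *m diag_mx D *m diag_mx D *m y.
  by rewrite -!mulmxA (mulmxA P) PPt mul1mx.
rewrite mul_mx_diag mul_mx_diag mxE; apply: eq_bigr => i _.
rewrite rmorphM rmorphXn /= wE -(real_ReE (Dreal i)) !mxE.
by rewrite expr2; ring.
Qed.

Local Open Scope ring_scope.
Definition vn d (v : 'cV[R]_d) := Num.sqrt (sq v).
Definition dot d (x y : 'cV[R]_d) := \sum_i x i 0 * y i 0.

Lemma sq_ge0 d (v : 'cV[R]_d) : 0 <= sq v.
Proof. by apply: sumr_ge0 => i _; rewrite sqr_ge0. Qed.

Lemma sq_eq0 d (v : 'cV[R]_d) : sq v = 0 -> v = 0.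
Proof.
move=> /psumr_eq0P h; apply/matrixP => i j; rewrite ord1 mxE.
by apply/eqP; rewrite -sqrf_eq0; apply/eqP/h => // k _; rewrite sqr_ge0.
Qed.

Lemma sqZ d c (v : 'cV[R]_d) : sq (c *: v) = c ^+ 2 * sq v.
Proof. by rewrite /sq mulr_sumr; apply: eq_bigr => i _; rewrite mxE exprMn. Qed.

Lemma sqN d (v : 'cV[R]_d) : sq (- v) = sq v.
Proof. by rewrite -scaleN1r sqZ sqrrN expr1n mul1r. Qed.

Lemma sqDZ d (x y : 'cV[R]_d) t :
  sq (x + t *: y) = sq x + 2 * t * dot x y + t ^+ 2 * sq y.
Proof.
rewrite /sq /dot !mulr_sumr -!big_split /=; apply: eq_bigr => i _.
rewrite !mxE; ring.
Qed.

Lemma CS d (x y : 'cV[R]_d) : dot x y ^+ 2 <= sq x * sq y.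
Proof.
have [y0|yn0] := eqVneq (sq y) 0.
  have -> : y = 0 by apply: sq_eq0.
  rewrite /dot big1 => [|i _]; last by rewrite mxE mulr0.
  by rewrite expr0n /= mulr_ge0 ?sq_ge0.
have sp : 0 < sq y by rewrite lt_def yn0 sq_ge0.
have h := sq_ge0 (x + (- (dot x y / sq y)) *: y).
rewrite sqDZ in h.
have e : (- (dot x y / sq y)) * sq y = - dot x y by rewrite mulNr divfK.
have h2 := mulr_ge0 h (ltW sp).
nra.
Qed.

Lemma vn_ge0 d (x : 'cV[R]_d) : 0 <= vn x.
Proof. exact: sqrtr_ge0. Qed.

Lemma vnD d (x y : 'cV[R]_d) : vn (x + y) <= vn x + vn y.
Proof.
have hx := sq_ge0 x; have hy := sq_ge0 y.
rewrite /vn -(ger0_norm (addr_ge0 (sqrtr_ge0 (sq x)) (sqrtr_ge0 (sq y)))).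
rewrite -sqrtr_sqr ler_sqrt ?sqr_ge0 // -(scale1r y) sqDZ scale1r.
have a2 := sqr_sqrtr hx; have b2 := sqr_sqrtr hy.
have a0 := sqrtr_ge0 (sq x); have b0 := sqrtr_ge0 (sq y).
have cs := CS x y.
have hd : dot x y <= Num.sqrt (sq x) * Num.sqrt (sq y).
  have cs2 : Num.sqrt (dot x y ^+ 2) <= Num.sqrt (sq x * sq y).
    by rewrite ler_sqrt ?mulr_ge0.
  rewrite sqrtr_sqr (sqrtrM (sq y) hx) in cs2.
  exact: le_trans (ler_norm _) cs2.
nra.
Qed.

Lemma vnZ d c (x : 'cV[R]_d) : vn (c *: x) = `|c| * vn x.
Proof. by rewrite /vn sqZ sqrtrM ?sqr_ge0 // sqrtr_sqr. Qed.

Lemma vnN d (x : 'cV[R]_d) : vn (- x) = vn x.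
Proof. by rewrite /vn sqN. Qed.

Lemma vnB d (x y : 'cV[R]_d) : `|vn x - vn y| <= vn (x - y).
Proof.
rewrite ler_norml; apply/andP; split.
  have e : vn (y - x) = vn (x - y) by rewrite -vnN opprB.
  have := vnD (y - x) x; rewrite subrK e; lra.
have := vnD (x - y) y; rewrite subrK; lra.
Qed.

Lemma vn_eq0 d (x : 'cV[R]_d) : vn x = 0 -> x = 0.
Proof. by move/eqP; rewrite sqrtr_eq0 => h; apply: sq_eq0; apply/eqP; rewrite eq_le h sq_ge0. Qed.

Lemma vn1 d (x : 'cV[R]_d) : vn x = 1 -> sq x = 1.
Proof. by move=> h; rewrite -(sqr_sqrtr (sq_ge0 x)) -/(vn x) h expr1n. Qed.

Lemma sym_bound d (M : 'M[R]_d) : M^T = M ->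
  exists K, 0 <= K /\ forall x, sq (M *m x) <= K * sq x.
Proof.
move=> hM; have [r [_ hr]] := spec_sym hM.
exists (\sum_j r j ^+ 2); split; first by apply: sumr_ge0 => j _; apply: sqr_ge0.
move=> x; have [w [w0 [-> ->]]] := hr x.
rewrite mulr_sumr; apply: ler_sum => i _; apply: ler_wpM2r => //.
rewrite (bigD1 i) //= lerDl; apply: sumr_ge0 => j _; exact: sqr_ge0.
Qed.

Lemma vnormE d (x : 'cV[R]_d) : vnorm x = vn x.
Proof. by []. Qed.

Lemma opnorm_ub d (M : 'M[R]_d) : M^T = M ->
  forall x, vnorm x = 1 -> vnorm (M *m x) <= opnorm M.
Proof.
move=> hM x hx; have [K [K0 hK]] := sym_bound hM.
have hub : has_ubound [set vnorm (M *m x) | x in [set x : 'cV[R]_d | vnorm x = 1]].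
  exists (Num.sqrt K) => _ [z hz <-].
  rewrite vnormE /vn ler_sqrt //; have := hK z; rewrite (vn1 hz) mulr1 //.
have := ub_le_sup hub; apply; by exists x.
Qed.

Lemma opnorm_le d (M : 'M[R]_d) K : (exists x : 'cV[R]_d, vnorm x = 1) ->
  (forall x, vnorm x = 1 -> vnorm (M *m x) <= K) -> opnorm M <= K.
Proof.
move=> [x0 hx0] hK; apply: ge_sup; first by exists (vnorm (M *m x0)); exists x0.
by move=> _ [z hz <-]; apply: hK.
Qed.

Lemma vn0 d : vn (0 : 'cV[R]_d) = 0.
Proof. by rewrite /vn /sq big1 ?sqrtr0 // => i _; rewrite mxE expr0n. Qed.

Lemma opnorm_scale d (M : 'M[R]_d) : M^T = M ->
  forall x, vnorm (M *m x) <= opnorm M * vnorm x.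
Proof.
move=> hM x; have [->|xn0] := eqVneq x 0.
  by rewrite mulmx0 !vnormE vn0 mulr0.
have s0 : 0 < vn x.
  rewrite lt_def vn_ge0 andbT; apply/eqP => /vn_eq0 h; by rewrite h eqxx in xn0.
have hu : vnorm ((vn x)^-1 *: x) = 1.
  by rewrite vnormE vnZ ger0_norm ?invr_ge0 ?vn_ge0 // mulVf // gt_eqF.
have := opnorm_ub hM hu; rewrite -scalemxAr vnormE vnZ ger0_norm ?invr_ge0 ?vn_ge0 //.
rewrite vnormE -ler_pdivlMl ?invr_gt0 // invrK mulrC => h.
by rewrite vnormE.
Qed.

Lemma eig_vec d (A : 'M[R]_d) a : A^T = A -> eigenvalue A a ->
  exists x : 'cV[R]_d, x != 0 /\ A *m x = a *: x.
Proof.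
move=> hA /eigenvalueP [v hv vn0]; exists v^T; split.
  by apply: contra vn0 => /eqP h; rewrite -(trmxK v) h trmx0.
by rewrite -{1}hA -trmx_mul hv linearZ.
Qed.

Lemma sq_gt0 d (x : 'cV[R]_d) : x != 0 -> 0 < sq x.
Proof.
move=> xn0; rewrite lt_def sq_ge0 andbT; apply/eqP => /sq_eq0 h.
by rewrite h eqxx in xn0.
Qed.

Lemma eig_pos d (A : 'M[R]_d) a : spd A -> eigenvalue A a -> 0 < a.
Proof.
move=> [hA hpos] /(eig_vec hA) [x [xn0 hx]].
have := hpos x xn0; rewrite -mulmxA hx -scalemxAr mxE.
have -> : (x^T *m x) 0 0 = sq x by rewrite mxE; apply: eq_bigr => i _; rewrite mxE expr2.
have := sq_gt0 xn0; nra.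
Qed.

Lemma spd_spec d (A : 'M[R]_d) : spd A -> (0 < d)%N ->
  exists rmin rmax, [/\ 0 < rmin, eigenvalue A rmin, eigenvalue A rmax &
    forall x, rmin ^+ 2 * sq x <= sq (A *m x) <= rmax ^+ 2 * sq x].
Proof.
move=> hspd d0; have hA := hspd.1.
have [r [er hr]] := spec_sym hA.
pose i0 := Ordinal d0.
have [imin _ hmin] := @arg_minP _ R _ i0 xpredT r isT.
have [imax _ hmax] := @arg_maxP _ R _ i0 xpredT r isT.
have rpos i : 0 < r i by apply: eig_pos hspd (er i).
exists (r imin), (r imax); split => //.
move=> x; have [w [w0 [-> ->]]] := hr x.
rewrite !mulr_sumr; apply/andP; split; apply: ler_sum => i _.
  have h1 : r imin <= r i := hmin i isT.
  have p1 := w0 i; have p2 := rpos imin; have p3 := rpos i.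
  have q : 0 <= r i - r imin by rewrite subr_ge0.
  have := mulr_ge0 (mulr_ge0 (q : 0 <= r i - r imin) (ltW (addr_gt0 p3 p2))) p1.
  nra.
have h1 : r i <= r imax := hmax i isT.
have p1 := w0 i; have p2 := rpos imax; have p3 := rpos i.
have q : 0 <= r imax - r i by rewrite subr_ge0.
have := mulr_ge0 (mulr_ge0 (q : 0 <= r imax - r i) (ltW (addr_gt0 p2 p3))) p1.
nra.
Qed.

Lemma lambda_bounds d (A : 'M[R]_d) rmin rmax : spd A -> 0 < rmin ->
  eigenvalue A rmin -> eigenvalue A rmax ->
  (forall x, rmin ^+ 2 * sq x <= sq (A *m x) <= rmax ^+ 2 * sq x) ->
  [/\ 0 < rmax, rmax <= lambda_max A, 0 < lambda_min A & lambda_min A <= rmin].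
Proof.
move=> hspd rmin0 emin emax hb; have hA := hspd.1.
have rmax0 := eig_pos hspd emax.
have eigb a : eigenvalue A a -> rmin <= a /\ a <= rmax.
  move=> ea; have a0 := eig_pos hspd ea; have [x [xn0 hx]] := eig_vec hA ea.
  have s0 := sq_gt0 xn0.
  have := hb x; rewrite hx sqZ => /andP[h1 h2].
  rewrite (ler_pM2r s0) in h1; rewrite (ler_pM2r s0) in h2.
  have p1 := addr_gt0 a0 rmin0; have p2 := addr_gt0 a0 rmax0.
  split; nra.
have ub : ubound (eigenvalues A) rmax by move=> a /eigb [].
have lb : lbound (eigenvalues A) rmin by move=> a /eigb [].
have hmax : rmax <= lambda_max A.
  have h := @ub_le_sup R (eigenvalues A) (ex_intro _ rmax ub).
  exact: h _ emax.
have hmin1 : rmin <= lambda_min A by apply: lb_le_inf => //; exists rmin.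
have hmin2 : lambda_min A <= rmin.
  have h := @ge_inf R (eigenvalues A) (ex_intro _ rmin lb).
  exact: h _ emin.
split => //; exact: lt_le_trans rmin0 hmin1.
Qed.

Lemma normalize_bound d (u v : 'cV[R]_d) : 0 < vn u ->
  vn ((vn u)^-1 *: u - (vn v)^-1 *: v) <= 2 * vn (u - v) / vn u.
Proof.
set a := vn u; set b := vn v => a0.
have -> : a^-1 *: u - b^-1 *: v = a^-1 *: (u - v) + (a^-1 - b^-1) *: v.
  by rewrite scalerBr scalerBl addrA subrK.
have ia : 0 <= a^-1 by rewrite invr_ge0 ltW.
apply: (le_trans (vnD _ _)); rewrite !vnZ -/b (ger0_norm ia).
have hX : `|a^-1 - b^-1| * b <= vn (u - v) / a.
  have [b0|bn0] := eqVneq b 0.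
    by rewrite b0 mulr0 divr_ge0 ?vn_ge0 ?ltW.
  have b0 : 0 < b by rewrite lt_def bn0 vn_ge0.
  have -> : a^-1 - b^-1 = ((b - a) / a) / b.
    by field; rewrite bn0 gt_eqF.
  have ib : 0 <= b^-1 by rewrite invr_ge0 ltW.
  rewrite normrM (ger0_norm ib) divfK ?gt_eqF //.
  rewrite normrM (ger0_norm ia); apply: ler_wpM2r => //.
  by rewrite distrC; apply: vnB.
have e : 2 * vn (u - v) / a = a^-1 * vn (u - v) + vn (u - v) / a.
  by ring.
rewrite e; apply: lerD => //.
Qed.
End S.

Theorem lemma1 (R : realType) (d : nat) (A B : 'M[R]_d) (r1 r2 : 'cV[R]_d)
  (eps1 eps2 : R) :
  spd A -> spd B ->
  opnorm (A - B) <= eps1 * opnorm A ->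
  vnorm r1 = 1 -> vnorm r2 = 1 ->
  vnorm (r1 - r2) <= eps2 ->
  lambda_max A / lambda_min A * (eps2 + eps1) <= 1 / 2 ->
  vnorm ((vnorm (A *m r1))^-1 *: (A *m r1) - (vnorm (B *m r2))^-1 *: (B *m r2))
    <= 4 * (lambda_max A / lambda_min A) * (eps2 + eps1).
Proof.
move=> hA hB hAB hr1 hr2 hr12 _.
have d0 : (0 < d)%N.
  rewrite lt0n; apply/eqP => d0; subst d.
  by move: hr1; rewrite /vnorm big_ord0 sqrtr0 => /eqP; rewrite eq_sym oner_eq0.
have [rmin [rmax [rmin0 emin emax hb]]] := spd_spec hA d0.
have [rmax0 hmax hlmin0 hlmin] := lambda_bounds hA rmin0 emin emax hb.
have symA := hA.1.
have symAB : (A - B)^T = A - B by rewrite linearB /= hA.1 hB.1.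
set oA := opnorm A.
have oAle : oA <= rmax.
  apply: opnorm_le; first by exists r1.
  move=> x hx; rewrite vnormE /vn; have := hb x; rewrite (vn1 hx) !mulr1 => /andP[_ h].
  by rewrite -(ger0_norm (ltW rmax0)) -sqrtr_sqr ler_sqrt ?sqr_ge0.
set a := vnorm (A *m r1).
have age : rmin <= a.
  rewrite /a vnormE /vn; have := hb r1; rewrite (vn1 hr1) !mulr1 => /andP[h _].
  by rewrite -(ger0_norm (ltW rmin0)) -sqrtr_sqr ler_sqrt ?sq_ge0.
have a0 : 0 < a := lt_le_trans rmin0 age.
have oAa : a <= oA := opnorm_ub symA hr1.
have e2 : 0 <= eps2 := le_trans (vn_ge0 _) hr12.
have hABr : vnorm ((A - B) *m r2) <= eps1 * oA := le_trans (opnorm_ub symAB hr2) hAB.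
have e1 : 0 <= eps1.
  have := le_trans (vn_ge0 _) hABr; rewrite pmulr_lge0 //; exact: lt_le_trans a0 oAa.
have huv : vnorm (A *m r1 - B *m r2) <= oA * (eps2 + eps1).
  have -> : A *m r1 - B *m r2 = A *m (r1 - r2) + (A - B) *m r2.
    by rewrite mulmxBr mulmxBl addrA subrK.
  apply: (le_trans (vnD _ _)).
  have h1 := le_trans (opnorm_scale symA (r1 - r2)) (ler_wpM2l (le_trans (ltW a0) oAa) hr12).
  rewrite -!vnormE; lra.
have key := normalize_bound (B *m r2) a0.
rewrite -!vnormE -/a in key *.
set k := lambda_max A / lambda_min A.
have k0 : 0 <= k by rewrite divr_ge0 // ltW // (lt_le_trans rmax0 hmax).
have hk : oA <= k * a.
  have hl : k * lambda_min A = lambda_max A by rewrite /k divfK // gt_eqF.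
  apply: (le_trans oAle); apply: (le_trans hmax); rewrite -hl.
  apply: ler_wpM2l => //; exact: le_trans hlmin age.
have E0 : 0 <= eps2 + eps1 by apply: addr_ge0.
have h2 : vn (A *m r1 - B *m r2) / a <= k * (eps2 + eps1).
  rewrite ler_pdivrMr //; apply: (le_trans huv).
  rewrite mulrAC; apply: ler_wpM2r => //.
have kE : 0 <= k * (eps2 + eps1) by apply: mulr_ge0.
rewrite -mulrA in key.
rewrite -vnormE in h2. lra.
Qed.
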